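(* Let $X$ and $Y$ be real-valued random variables and consider the two Bayesian causal models $M_{X\rightarrow Y}$ and $M_{Y\rightarrow X}$ defined as follows. In $M_{X\rightarrow Y}$, the marginal density of the cause is $p(x\mid M_{X\rightarrow Y})=\mathcal{N}(x\mid 0,1)$ and the conditional density of the effect is $p(y\mid x,\boldsymbol{\theta}_Y,M_{X\rightarrow Y})=\mathcal{N}\big(y\mid \mu(x;\boldsymbol{\theta}_Y),\sigma^2(x;\boldsymbol{\theta}_Y)\big)$, where $\mu(\cdot;\boldsymbol{\theta}_Y)=f_{Y,1}(\cdot;\boldsymbol{\theta}_Y)$ and $\sigma(\cdot;\boldsymbol{\theta}_Y)=\zeta\big(f_{Y,2}(\cdot;\boldsymbol{\theta}_Y)\big)$ for a neural network $\mathbf{f}_Y=(f_{Y,1},f_{Y,2}):\mathbb{R}\to\mathbb{R}^2$ with one hidden layer and parameters $\boldsymbol{\theta}_Y$, and $\zeta$ is a positive link function (e.g. $\exp$ or softplus). The parameters $\boldsymbol{\theta}_Y$ have independent zero-mean Gaussian priors: each weight $w_{ij}\sim\mathcal{N}(0,z_{ij}^2)$ and each bias $b_j\sim\mathcal{N}(0,\sigma_b^2)$. The model $M_{Y\rightarrow X}$ is defined symmetrically with the roles of $X$ and $Y$ exchanged (marginal $\mathcal{N}(y\mid0,1)$, conditional $\mathcal{N}(x\mid \mu(y;\boldsymbol{\theta}_X),\sigma^2(y;\boldsymbol{\theta}_X))$ given by an analogous one-hidden-layer network with the same type of Gaussian priors). Then $M_{X\rightarrow Y}$ and $M_{Y\rightarrow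 X}$ are not separable-compatible.
   Context: A Bayesian causal model $M_{X\rightarrow Y}$ consists of a class $\mathcal{C}_X$ of marginal distributions $m_X$ of $X$, a class $\mathcal{C}_{Y\mid X}$ of conditional distributions $c_{Y\mid X}$ of $Y$ given $X$, and a factorized prior $\pi_{X\rightarrow Y}(m_X,c_{Y\mid X})=\pi_X(m_X)\pi_{Y\mid X}(c_{Y\mid X})$; similarly $M_{Y\rightarrow X}$ has $\mathcal{C}_Y$, $\mathcal{C}_{X\mid Y}$ and prior $\pi_{Y\rightarrow X}(m_Y,c_{X\mid Y})=\pi_Y(m_Y)\pi_{X\mid Y}(c_{X\mid Y})$. Let $\gamma:\mathcal{C}_X\times\mathcal{C}_{Y\mid X}\to\mathcal{C}_Y\times\mathcal{C}_{X\mid Y}$ be the bijection mapping $(m_X,c_{Y\mid X})$ to the unique $(m_Y,c_{X\mid Y})$ with $m_X(x)c_{Y\mid X}(y\mid x)=m_Y(y)c_{X\mid Y}(x\mid y)$ for all $x,y$ (i.e. the anti-causal factorization of the same joint). The two models are called separable-compatible if such a bijection $\gamma$ exists, the push-forward $\gamma_\sharp\pi_{X\rightarrow Y}$ is separable with respect to $\mathcal{C}_Y\times\mathcal{C}_{X\mid Y}$ and equals $\pi_Y(m_Y)\pi_{X\mid Y}(c_{X\mid Y})$, and the push-forward $\gamma^{-1}_\sharp\pi_{Y\rightarrow X}$ is separable with respect to $\mathcal{C}_X\times\mathcal{C}_{Y\mid X}$ (equivalently: the anti-causal factorization of each model lies in the same distribution classes as the other model, with a prior that factorizes into independent priors matching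 the other model's priors). *)

(* Defs.v *)
From HB Require Import structures.
From mathcomp Require Import all_boot all_order all_algebra.
From mathcomp Require Import all_classical all_reals all_analysis.
From mathcomp Require Import normal_distribution.

Set Implicit Arguments.
Unset Strict Implicit.
Unset Printing Implicit Defensive.

Import Order.TTheory GRing.Theory Num.Theory.
Local Open Scope classical_set_scope.
Local Open Scope ring_scope.

(*   A conditional density is c : R -> R -> R with                     *)
(*       c u v = density of the EFFECT at v given the CAUSE equal to u. *)

Definition dens (R : realType) := R -> R.
Definition cdens (R : realType) := R -> R -> R.
HB.instance Definition _ (R : realType) := gen_eqMixin (dens R).
HB.instance Definition _ (R : realType) := gen_choiceMixin (dens R).
HB.instance Definition _ (R : realType) := gen_eqMixin (cdens R).
HB.instance Definition _ (R : realType) := gen_choiceMixin (cdens R).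
HB.instance Definition _ (R : realType) := isPointed.Build (dens R) (fun _ => 0%R).
HB.instance Definition _ (R : realType) := isPointed.Build (cdens R) (fun _ _ => 0%R).

Definition cyl_dens (R : realType) : set (set (dens R)) :=
  [set S | exists (x : R) (B : set R), measurable B /\ S = (fun f => f x) @^-1` B].

Definition cyl_cdens (R : realType) : set (set (cdens R)) :=
  [set S | exists (u v : R) (B : set R),
      measurable B /\ S = (fun c => c u v) @^-1` B].

Notation densT R := (g_sigma_algebraType (@cyl_dens R)).
Notation cdensT R := (g_sigma_algebraType (@cyl_cdens R)).

(* A Bayesian causal model  cause -> effect :                          *)
(*   a class of marginals of the cause, a class of conditionals of the *)
(*   effect given the cause, and independent priors on both classes   *)

Record bcm (R : realType) := BCM {
  bcm_CM : set (densT R);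
  bcm_CC : set (cdensT R);
  bcm_piM : set (densT R) -> \bar R;
  bcm_piC : set (cdensT R) -> \bar R }.

(* Product of two priors  pi1(m) pi2(c),  as a set function on the   *)
(* product sigma-algebra (Fubini formula for the product measure).    *)
Definition prior_prod (R : realType) (p1 : set (densT R) -> \bar R)
    (p2 : set (cdensT R) -> \bar R) : set (densT R * cdensT R) -> \bar R :=
  fun S => (\int[p1]_m p2 [set c | S (m, c)])%E.

Definition bcm_prior (R : realType) (M : bcm R) :=
  prior_prod (bcm_piM M) (bcm_piC M).

Definition separable_compatible (R : realType) (M1 M2 : bcm R) : Prop :=
  exists gamma : densT R * cdensT R -> densT R * cdensT R,
  exists delta : densT R * cdensT R -> densT R * cdensT R,
    measurable_fun setT gamma /\ measurable_fun setT delta /\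
      set_bij (bcm_CM M1 `*` bcm_CC M1) (bcm_CM M2 `*` bcm_CC M2) gamma /\
      (forall p, (bcm_CM M1 `*` bcm_CC M1) p -> delta (gamma p) = p) /\
      (forall q, (bcm_CM M2 `*` bcm_CC M2) q -> gamma (delta q) = q) /\
      (* gamma maps a causal factorization to the anti-causal one of the same joint *)
      (forall p, (bcm_CM M1 `*` bcm_CC M1) p ->
         forall x y : R, p.1 x * p.2 x y = (gamma p).1 y * (gamma p).2 y x) /\
      (forall S, measurable S ->
         pushforward (bcm_prior M1) gamma S = bcm_prior M2 S) /\
      (* gamma^{-1}_# pi_{Y->X} is separable w.r.t. C_X x C_{Y|X} *)
      (exists (q1 : probability (densT R) R) (q2 : probability (cdensT R) R),
        forall S, measurable S ->
          pushforward (bcm_prior M2) delta S = prior_prod q1 q2 S).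

(* One-hidden-layer network f = (f1, f2) : R -> R^2 of width H.         *)
(* Parameter vector theta : (4H+2).-tuple R with layout                 *)
(*   theta_j        (j < H) : input->hidden weight of hidden unit j     *)
(*   theta_(H+j)    (j < H) : bias of hidden unit j                     *)
(*   theta_(2H+j)   (j < H) : hidden unit j -> output 1 weight          *)
(*   theta_(3H+j)   (j < H) : hidden unit j -> output 2 weight          *)
(*   theta_(4H), theta_(4H+1) : biases of outputs 1 and 2.              *)

Definition npar (H : nat) : nat := (4 * H + 2)%N.

Definition net_out (R : realType) (H : nat) (act : R -> R)
    (theta : (npar H).-tuple R) (o : nat) (x : R) : R :=
  nth 0 theta (4 * H + o)%N +
  \sum_(j < H) nth 0 theta ((2 + o) * H + j)%N *
               act (nth 0 theta j * x + nth 0 theta (H + j)%N).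

Definition is_bias (H k : nat) : bool := (H <= k < 2 * H)%N || (4 * H <= k)%N.

Definition prior_sd (R : realType) (H : nat) (z : nat -> R) (sb : R) (k : nat) : R :=
  if is_bias H k then sb else z k.

Definition indep_gauss_prior (R : realType) (n : nat) (sd : nat -> R)
    (mu : probability (n.-tuple R) R) : Prop :=
  forall B : 'I_n -> set R, (forall k, measurable (B k)) ->
    mu [set t : n.-tuple R | forall k : 'I_n, B k (tnth t k)] =
    (\prod_(k < n) normal_prob 0 (sd k) (B k))%E.

Definition net_cond (R : realType) (H : nat) (act zeta : R -> R)
    (theta : (npar H).-tuple R) : cdensT R :=
  fun u v => normal_pdf (net_out act theta 0 u) (zeta (net_out act theta 1 u)) v.

Definition std_normal_dens (R : realType) : densT R := fun x => normal_pdf 0 1 x.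

Definition nn_bcm (R : realType) (H : nat) (act zeta : R -> R)
    (mu : probability ((npar H).-tuple R) R) : bcm R :=
  BCM [set @std_normal_dens R]
      (range (@net_cond R H act zeta))
      (dirac (@std_normal_dens R))
      (pushforward mu (@net_cond R H act zeta)).

(* Main.v *)
Require Import Defs.
From HB Require Import structures.
From mathcomp Require Import all_boot all_order all_algebra.
From mathcomp Require Import all_classical all_reals all_analysis.
From mathcomp Require Import normal_distribution.
From mathcomp Require Import ring lra zify.
Import Order.TTheory GRing.Theory Num.Theory.
Local Open Scope classical_set_scope.
Local Open Scope ring_scope.

Lemma exp_diff {R : realType} {P C u1 v1 u2 v2 : R} : 0 < P ->
  P * expR u1 = C * expR v1 -> P * expR u2 = C * expR v2 -> u1 - v1 = u2 - v2.
Proof.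
move=> P0 h1 h2; apply: expR_inj; rewrite !expRB.
have hC : C = P * expR u1 / expR v1 by rewrite h1 mulfK // gt_eqF // expR_gt0.
have hC' : C = P * expR u2 / expR v2 by rewrite h2 mulfK // gt_eqF // expR_gt0.
apply: (mulfI (lt0r_neq0 P0)); rewrite !mulrA -hC -hC' //.

Qed.

Lemma gauss_shape {R : realType} {m : R} (s : R) {K : R} : s != 0 ->
  normal_pdf m s 1 = K * normal_pdf 0 1 1 ->
  normal_pdf m s 0 = K * normal_pdf 0 1 0 ->
  normal_pdf m s (-1) = K * normal_pdf 0 1 (-1) ->
  m = 0 /\ s ^+ 2 = 1.
Proof.
move=> s0; rewrite !normal_pdfE ?oner_neq0 // /normal_fun => h1 h0 hm.
rewrite !mulrA in h1 h0 hm.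
have Pp := normal_peak_gt0 s0.
have d1 := exp_diff Pp h1 hm.
have d2 := exp_diff Pp h1 h0.
have t0 : (s ^+ 2 *+ 2) != 0 by rewrite mulrn_eq0 /= sqrf_eq0.
set t := (s ^+ 2 *+ 2) in t0 d1 d2 *.
have tm : t * t^-1 = 1 by rewrite mulfV.
have tn : t^-1 != 0 by rewrite invr_eq0.
set u := t^-1 in tm tn d1 d2 *.
rewrite !mulNr in d1 d2.
have hm0 : m * u = 0.
  move: d1; rewrite expr1n /= => d1. nra.
have m0 : m = 0.
  by move/eqP: hm0; rewrite mulf_eq0 (negbTE tn) orbF => /eqP.
split=> //.
subst m.
have : u = 2^-1.
  move: d2; rewrite expr1n /=. nra.
move=> hu.
have : t = 2 by rewrite -[t]invrK -/u hu invrK.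
rewrite /t => /eqP; rewrite -mulr_natr -subr_eq0 -{2}[2](mul1r) -mulrBl mulf_eq0 pnatr_eq0 orbF subr_eq0.
by move/eqP.
Qed.

Theorem proposition4p2 (R : realType)
  (* model X -> Y : network f_Y of width H, activation act, link zeta *)
  (H : nat) (act zeta : R -> R) (z : nat -> R) (sb : R)
  (mu : probability ((npar H).-tuple R) R)
  (* model Y -> X : network f_X of width H', activation act', link zeta' *)
  (H' : nat) (act' zeta' : R -> R) (z' : nat -> R) (sb' : R)
  (mu' : probability ((npar H').-tuple R) R) :
  (0 < H)%N -> (0 < H')%N ->
  (forall t, 0 < zeta t) -> (forall t, 0 < zeta' t) ->
  (forall k, 0 < z k) -> 0 < sb -> (forall k, 0 < z' k) -> 0 < sb' ->
  indep_gauss_prior (prior_sd H z sb) mu ->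
  indep_gauss_prior (prior_sd H' z' sb') mu' ->
  ~ separable_compatible (nn_bcm act zeta mu) (nn_bcm act' zeta' mu').
Proof.
move=> _ _ zp zp' _ _ _ _ _ _ [g [d [_ [_ [[gmap _ _] [_ [_ [fact _]]]]]]]].
pose f := fun i : nat => if i == (4 * H)%N then 1 else 0 : R.
have sz : size (mkseq f (npar H)) == npar H by rewrite size_mkseq.
pose th : (npar H).-tuple R := Tuple sz.
have nthf : forall k, (k < npar H)%N -> nth 0 th k = f k.
  by move=> k hk; rewrite /= nth_mkseq.
have out0 : forall u, net_out act th 0 u = 1.
  move=> u; rewrite /net_out nthf; last by rewrite /npar; lia.
  rewrite /f addn0 eqxx big1 ?addr0 // => j _.
  rewrite nthf; last by rewrite /npar; have := ltn_ord j; lia.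
  by rewrite /f ifF ?mul0r //; apply/negbTE; have := ltn_ord j; lia.
have out1 : forall u, net_out act th 1 u = 0.
  move=> u; rewrite /net_out nthf; last by rewrite /npar; lia.
  rewrite /f ifF; last by apply/negbTE; lia.
  rewrite big1 ?addr0 // => j _.
  rewrite nthf; last by rewrite /npar; have := ltn_ord j; lia.
  by rewrite /f ifF ?mul0r //; apply/negbTE; have := ltn_ord j; lia.
pose p : densT R * cdensT R := (@std_normal_dens R, net_cond act zeta th).
have inp : (bcm_CM (nn_bcm act zeta mu) `*` bcm_CC (nn_bcm act zeta mu)) p.
  by split => //=; exists th.
have [/= g1 [th' _ g2]] := gmap p inp.
set s := zeta 0.
have F : forall x y, normal_pdf 0 1 x * normal_pdf 1 s y =
   normal_pdf 0 1 y * normal_pdf (net_out act' th' 0 y) (zeta' (net_out act' th' 1 y)) x.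
  move=> x y; have := fact p inp x y.
  by rewrite /= g1 -g2 /std_normal_dens /net_cond out0 out1.
have phipos : forall x : R, 0 < normal_pdf 0 1 x.
  move=> x; rewrite normal_pdfE ?oner_neq0 //.
  by rewrite mulr_gt0 ?normal_peak_gt0 ?oner_neq0 ?expR_gt0.
have key : forall y : R, normal_pdf 1 s y = 1 * normal_pdf 0 1 y.
  move=> y.
  set m' := net_out act' th' 0 y; set s' := zeta' (net_out act' th' 1 y).
  have s'0 : s' != 0 by rewrite gt_eqF // zp'.
  pose K := normal_pdf 1 s y / normal_pdf 0 1 y.
  have hx : forall x, normal_pdf m' s' x = K * normal_pdf 0 1 x.
    move=> x; apply: (mulfI (lt0r_neq0 (phipos y))).
    rewrite -(F x y) /K; field; exact: lt0r_neq0 (phipos y).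
  have [m0 s1] := gauss_shape _ s'0 (hx 1) (hx 0) (hx (-1)).
  have s'1 : s' = 1.
    have : (s' - 1) * (s' + 1) = 0 by rewrite -subr_sqr s1 expr1n subrr.
    move/eqP; rewrite mulf_eq0 => /orP[/eqP|/eqP]; first by move/eqP; rewrite subr_eq0 => /eqP.
    by move=> h; have := zp' (net_out act' th' 1 y); rewrite -/s'; lra.
  have := F 0 y; rewrite -/m' -/s' m0 s'1 mulrC => /mulIf; rewrite mul1r; apply.
  by rewrite gt_eqF.
have s0 : s != 0 by rewrite gt_eqF // zp.
have [h _] := gauss_shape _ s0 (key 1) (key 0) (key (-1)).
by move: h; apply/eqP; rewrite oner_neq0.
Qed.
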